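(* Let $n\ge 6$ and let $R_n(3,3)$ be the graph obtained from two triangles $uv_1v_2$ and $uw_1w_2$ sharing exactly the vertex $u$ by attaching $n-5$ pendant edges (new leaves) to the vertex $v_1$. Then \[ \operatorname{avm}(R_n(3,3))=\frac{7n-27}{3n-11}. \]
   Context: For a finite simple graph $G$, $\operatorname{avm}(G)$ is the average of $|M|$ over all maximal matchings $M$ of $G$ (a matching is maximal if it is not properly contained in another matching). *)

(* Defs.v *)
From mathcomp Require Import all_boot all_order all_algebra.
Set Implicit Arguments. Unset Strict Implicit. Unset Printing Implicit Defensive.
Import GRing.Theory Num.Theory.
Local Open Scope ring_scope.

Section Matchings.
Variables (T : finType) (g : rel T).

(* Edge set of the graph g (intended symmetric and irreflexive):
   two-element sets {x,y} with g x y. *)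
Definition edges : {set {set T}} :=
  [set e : {set T} | [exists x, exists y, (e == [set x; y]) && g x y]].

Definition is_matching (M : {set {set T}}) : bool :=
  (M \subset edges) &&
  [forall e in M, forall f in M, (e != f) ==> [disjoint e & f]].

Definition is_maximal_matching (M : {set {set T}}) : bool :=
  is_matching M &&
  [forall M' : {set {set T}}, (is_matching M' && (M \subset M')) ==> (M' == M)].

Definition maximal_matchings : {set {set {set T}}} :=
  [set M | is_maximal_matching M].

Definition avm : rat :=
  (\sum_(M in maximal_matchings) (#|M|)%:R) / (#|maximal_matchings|)%:R.
End Matchings.

(* R_n(3,3) on vertex set 'I_n: u = 0, v1 = 1, v2 = 2, w1 = 3, w2 = 4,
   leaves 5, ..., n-1 all adjacent to v1. *)
Definition r33_adj (a b : nat) : bool :=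
  [|| (a == 0%N) && (b \in [:: 1; 2; 3; 4]%N),
      (a == 1%N) && (b == 2%N),
      (a == 3%N) && (b == 4%N) |
      (a == 1%N) && (5 <= b)%N].

Definition R33 (n : nat) : rel 'I_n :=
  fun x y => r33_adj x y || r33_adj y x.
Arguments R33 n : clear implicits.

(* Main.v *)
Require Import Defs.
From mathcomp Require Import all_boot all_order all_algebra.
From mathcomp Require Import zify.
Set Implicit Arguments. Unset Strict Implicit.

Section Gen.
Variables (T : finType) (g : rel T).
Definition meets (e f : {set T}) := ~~ [disjoint e & f].

Lemma setE2 (a b c d : T) :
  ([set a; b] == [set c; d]) = ((a == c) && (b == d)) || ((a == d) && (b == c)).
Proof.
apply/eqP/idP.
  move=> /setP H; move: (H a) (H b) (H c) (H d); rewrite !inE !eqxx ?orbT /=.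
  by move=> /esym/orP[]/eqP ? /esym/orP[]/eqP ? /orP[]/eqP ? /orP[]/eqP ?; subst; rewrite ?eqxx ?orbT.
by case/orP => /andP[/eqP-> /eqP->] //; rewrite setUC.
Qed.

Lemma disj2 (a b c d : T) :
  [disjoint [set a; b] & [set c; d]] = ~~ [|| a == c, a == d, b == c | b == d].
Proof.
apply/idP/idP.
  move=> D; apply/negP; case/or4P => /eqP e.
  - by have := disjointFr D (set21 a b); rewrite e set21.
  - by have := disjointFr D (set21 a b); rewrite e set22.
  - by have := disjointFr D (set22 a b); rewrite e set21.
  - by have := disjointFr D (set22 a b); rewrite e set22.
move=> H; rewrite disjoint_subset; apply/subsetP => x; rewrite !inE.
by case/orP=> /eqP->; move: H; apply: contra => /orP[]->; rewrite ?orbT.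
Qed.

Lemma meets2 (a b c d : T) :
  meets [set a; b] [set c; d] = [|| a == c, a == d, b == c | b == d].
Proof. by rewrite /meets disj2 negbK. Qed.

Lemma edgeI x y : g x y -> [set x; y] \in edges g.
Proof. by move=> h; rewrite inE; apply/existsP; exists x; apply/existsP; exists y; rewrite eqxx. Qed.

Lemma edge_self e : e \in edges g -> meets e e.
Proof.
rewrite inE => /existsP[x /existsP[y /andP[/eqP -> _]]].
by rewrite meets2 eqxx.
Qed.

Lemma matching_eq M e f : is_matching g M -> e \in M -> f \in M -> meets e f -> e = f.
Proof.
case/andP=> _ /forallP H eM fM mf; case: (eqVneq e f) => // ne.
move: (H e); rewrite eM /= => /forall_inP/(_ f fM)/implyP/(_ ne) D.
by rewrite /meets D in mf.
Qed.

Lemma matching_edge M e : is_matching g M -> e \in M -> e \in edges g.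
Proof. by case/andP=> /subsetP s _; apply: s. Qed.

Lemma maxr M : is_maximal_matching g M ->
  forall e, e \in edges g -> exists2 f, f \in M & meets e f.
Proof.
case/andP=> mM /forallP Hmax e eE.
case: (boolP [exists f in M, meets e f]) => [/exists_inP[f fM mf]|]; first by exists f.
move=> /exists_inPn nm.
have mM' : is_matching g (e |: M).
  case/andP: mM => sM /forallP dM; apply/andP; split.
    apply/subsetP=> f; rewrite in_setU1 => /predU1P[->//|fM]; exact: (subsetP sM).
  apply/forallP=> f; apply/implyP; rewrite in_setU1 => /predU1P[->|fM];
    apply/forallP=> h; apply/implyP; rewrite in_setU1 => /predU1P[->|hM];
    apply/implyP=> ne.
  - by rewrite eqxx in ne.
  - by have := nm h hM; rewrite /meets negbK.
  - by have := nm f fM; rewrite /meets negbK disjoint_sym.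
  - by move: (dM f); rewrite fM /= => /forall_inP/(_ h hM)/implyP; apply.
have := Hmax (e |: M); rewrite mM' subsetUr /= => /eqP eq.
have eM : e \in M by rewrite -eq setU11.
by have := nm e eM; rewrite edge_self.
Qed.

Lemma maxl M : is_matching g M ->
  (forall e, e \in edges g -> exists2 f, f \in M & meets e f) -> is_maximal_matching g M.
Proof.
move=> mM cov; rewrite /is_maximal_matching mM /=.
apply/forallP=> M'; apply/implyP=> /andP[mM' sMM'].
rewrite eqEsubset sMM' andbT; apply/subsetP=> e eM'.
have [f fM mef] := cov e (matching_edge mM' eM').
by rewrite (matching_eq mM' eM' (subsetP sMM' f fM) mef).
Qed.

Lemma eq_of_sub M (S : {set {set T}}) : is_matching g M -> S \subset M ->
  (forall e, e \in edges g -> exists2 f, f \in S & meets e f) -> M = S.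
Proof.
move=> mM sSM cov; apply/eqP; rewrite eqEsubset sSM andbT; apply/subsetP=> e eM.
have [f fS mef] := cov e (matching_edge mM eM).
by rewrite (matching_eq mM eM (subsetP sSM f fS) mef).
Qed.

Lemma match2 A B : A \in edges g -> B \in edges g -> [disjoint A & B] ->
  is_matching g [set A; B].
Proof.
move=> hA hB D; apply/andP; split.
  by apply/subsetP=> e; rewrite in_set2 => /orP[]/eqP->.
apply/forall_inP=> e; rewrite !inE => /orP[]/eqP->; apply/forall_inP=> f;
  rewrite !inE => /orP[]/eqP->; rewrite ?eqxx //; apply/implyP=> _; first [done | by rewrite disjoint_sym].
Qed.

Lemma match3 A B C : A \in edges g -> B \in edges g -> C \in edges g ->
  [disjoint A & B] -> [disjoint A & C] -> [disjoint B & C] ->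
  is_matching g (A |: [set B; C]).
Proof.
move=> hA hB hC D1 D2 D3; apply/andP; split.
  by apply/subsetP=> e; rewrite in_setU1 in_set2 => /orP[/eqP->|/orP[]/eqP->].
apply/forall_inP=> e; rewrite !inE => /orP[/eqP->|/orP[]/eqP->]; apply/forall_inP=> f;
  rewrite !inE => /orP[/eqP->|/orP[]/eqP->]; rewrite ?eqxx //; apply/implyP=> _; first [done | by rewrite disjoint_sym].
Qed.

Lemma ex_here (A : {set T}) (R : {set {set T}}) (P : {set T} -> Prop) : P A -> exists2 f, f \in A |: R & P f.
Proof. by exists A; rewrite ?setU11. Qed.
Lemma ex_there (A : {set T}) (R : {set {set T}}) (P : {set T} -> Prop) : (exists2 f, f \in R & P f) -> exists2 f, f \in A |: R & P f.
Proof. by case=> f fR Pf; exists f; rewrite // in_setU1 fR orbT. Qed.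
Lemma ex_one (A : {set T}) (P : {set T} -> Prop) : P A -> exists2 f, f \in [set A] & P f.
Proof. by exists A; rewrite ?set11. Qed.
End Gen.

Section R.
Variable m : nat.
Local Notation N := (m.+4.+2).
Local Notation T := 'I_N.
Definition o0 : T := @Ordinal N 0 isT.
Definition o1 : T := @Ordinal N 1 isT.
Definition o2 : T := @Ordinal N 2 isT.
Definition o3 : T := @Ordinal N 3 isT.
Definition o4 : T := @Ordinal N 4 isT.
Definition o5 : T := @Ordinal N 5 isT.
Local Notation g := (R33 N).

Inductive edge_spec (e : {set T}) : Prop :=
 | ES01 of e = [set o0; o1] | ES02 of e = [set o0; o2] | ES03 of e = [set o0; o3]
 | ES04 of e = [set o0; o4] | ES12 of e = [set o1; o2] | ES34 of e = [set o3; o4]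
 | ESL (l : T) of 5 <= l & e = [set o1; l].

Ltac fixord := repeat match goal with
 | |- context [@Ordinal _ 0 ?h] => rewrite (_ : Ordinal h = o0); last by apply: val_inj
 | |- context [@Ordinal _ 1 ?h] => rewrite (_ : Ordinal h = o1); last by apply: val_inj
 | |- context [@Ordinal _ 2 ?h] => rewrite (_ : Ordinal h = o2); last by apply: val_inj
 | |- context [@Ordinal _ 3 ?h] => rewrite (_ : Ordinal h = o3); last by apply: val_inj
 | |- context [@Ordinal _ 4 ?h] => rewrite (_ : Ordinal h = o4); last by apply: val_inj
 end.

Lemma edgeP e : e \in edges g -> edge_spec e.
Proof.
rewrite inE => /existsP[x /existsP[y /andP[/eqP -> H]]].
move: H; case: x => x hx; case: y => y hy.
rewrite /R33 /r33_adj /=.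
case: x hx => [|[|[|[|[|x]]]]] hx; case: y hy => [|[|[|[|[|y]]]]] hy //= _; fixord;
 first [ by apply: ES01 | by apply: ES01; rewrite setUC
       | by apply: ES02 | by apply: ES02; rewrite setUC
       | by apply: ES03 | by apply: ES03; rewrite setUC
       | by apply: ES04 | by apply: ES04; rewrite setUC
       | by apply: ES12 | by apply: ES12; rewrite setUC
       | by apply: ES34 | by apply: ES34; rewrite setUC
       | (eapply ESL; [| reflexivity]; done)
       | (eapply ESL; [| rewrite setUC; reflexivity]; done) ].
Qed.

Definition build (c : 'I_4 + (T * 'I_3)) : {set {set T}} :=
 match c with
 | inl i => if val i == 0 then [set [set o1; o2]; [set o0; o3]]
            else if val i == 1 then [set [set o1; o2]; [set o0; o4]]
            else if val i == 2 then [set [set o1; o2]; [set o3; o4]]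
            else [set [set o0; o1]; [set o3; o4]]
 | inr (l, j) => if val j == 0 then [set o1; l] |: [set [set o0; o2]; [set o3; o4]]
            else if val j == 1 then [set [set o1; l]; [set o0; o3]]
            else [set [set o1; l]; [set o0; o4]]
 end.

Definition C : {set 'I_4 + (T * 'I_3)} :=
  [set c : 'I_4 + (T * 'I_3) | if c is inr (l, _) then 5 <= val l else true].

Ltac cleanup := repeat match goal with H : ?P |- _ =>
  lazymatch P with is_true (_ < nat_of_ord _) => fail | _ => clear H end end.
Ltac nat_solve := rewrite -?val_eqE /=; cleanup; lia.
Ltac solve_meet := rewrite meets2; nat_solve.
Ltac wit := first [ apply: ex_here; solve_meet | apply: ex_one; solve_meet
                  | apply: ex_there; wit ].
Ltac is_edge := apply: edgeI; rewrite /R33 /r33_adj /=; rewrite -?val_eqE /=;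
  first [ done | lia ].

Lemma cand_cov c : c \in C ->
  forall e, e \in edges g -> exists2 f, f \in build c & meets e f.
Proof.
rewrite inE; case: c => [[i hi]|[l [j hj]]] /= Hl e /edgeP;
 [ case: i hi => [|[|[|[|i]]]] hi //=
 | case: j hj => [|[|[|j]]] hj //= ];
 case=> [||||||l' Hl'] ->; wit.
Qed.

Lemma cand_match c : c \in C -> is_matching g (build c).
Proof.
rewrite inE; case: c => [[i hi]|[l [j hj]]] /= Hl;
 [ case: i hi => [|[|[|[|i]]]] hi //=
 | case: j hj => [|[|[|j]]] hj //= ];
 first [ apply: match3 | apply: match2 ]; try is_edge; rewrite disj2; nat_solve.
Qed.

Definition decode (M : {set {set T}}) : 'I_4 + (T * 'I_3) :=
 if [set o1; o2] \in M then
   inl (if [set o0; o3] \in M then @Ordinal 4 0 isT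
        else if [set o0; o4] \in M then @Ordinal 4 1 isT else @Ordinal 4 2 isT)
 else if [set o0; o1] \in M then inl (@Ordinal 4 3 isT)
 else if [pick l | [set o1; l] \in M] is Some l then
   inr (l, if [set o0; o2] \in M then @Ordinal 3 0 isT
           else if [set o0; o3] \in M then @Ordinal 3 1 isT else @Ordinal 3 2 isT)
 else inl (@Ordinal 4 0 isT).

Ltac res := rewrite ?inE ?setE2 -?val_eqE /=;
   repeat (case: ifP; rewrite ?inE ?setE2 -?val_eqE /=;
   try (move=> ?; exfalso; first [done | lia]); move=> _).

Ltac fin := solve [ repeat f_equal; apply: eq_irrelevance ].

Lemma decodeK c : c \in C -> decode (build c) = c.
Proof.
rewrite inE; case: c => [[i hi]|[l [j hj]]] /= Hl;
 [ case: i hi => [|[|[|[|i]]]] hi //=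
 | case: j hj => [|[|[|j]]] hj //= ]; rewrite /decode; res; try fin;
 (case: pickP => [l' H|H]; last by have := H l; rewrite !inE eqxx);
 (have e : l' = l by apply: val_inj; move: H; rewrite !inE !setE2 -?val_eqE /=; lia);
 subst l'; res; fin.
Qed.

Lemma build_inj : {in C &, injective build}.
Proof. by move=> c1 c2 h1 h2 e; rewrite -(decodeK h1) e decodeK. Qed.

Ltac subM := apply/subsetP=> ?; rewrite !inE;
  repeat (case/orP; [by move/eqP->|]); by move/eqP->.

Lemma max_build M : is_maximal_matching g M -> exists2 c, c \in C & M = build c.
Proof.
move=> HM; have cov := maxr HM; have mM : is_matching g M by case/andP: HM.
suff [c cC sub] : exists2 c, c \in C & build c \subset M.
  by exists c => //; apply: eq_of_sub mM sub (cand_cov cC).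
have E15 : [set o1; o5] \in edges g by is_edge.
have E34 : [set o3; o4] \in edges g by is_edge.
have E02 : [set o0; o2] \in edges g by is_edge.
have [f1 f1M m1] := cov _ E15.
have [f2 f2M m2] := cov _ E34.
have clash : forall e f, e \in M -> f \in M -> meets e f -> e != f -> False.
  by move=> e f eM fM mef; rewrite (matching_eq mM eM fM mef) eqxx.
case: (edgeP (matching_edge mM f1M)) => [||||||l Hl] ? ; subst f1;
  try (exfalso; move: m1; rewrite meets2 -?val_eqE /=; cleanup; lia);
case: (edgeP (matching_edge mM f2M)) => [||||||l' Hl'] ? ; subst f2;
  try (exfalso; move: m2; rewrite meets2 -?val_eqE /=; cleanup; lia);
  try (exfalso; apply: (clash _ _ f1M f2M); [solve_meet | rewrite setE2; nat_solve]).
- by exists (inl (@Ordinal 4 3 isT)); [rewrite inE | subM].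
- by exists (inl (@Ordinal 4 0 isT)); [rewrite inE | subM].
- by exists (inl (@Ordinal 4 1 isT)); [rewrite inE | subM].
- by exists (inl (@Ordinal 4 2 isT)); [rewrite inE | subM].
- by exists (inr (l, @Ordinal 3 1 isT)); [rewrite inE | subM].
- by exists (inr (l, @Ordinal 3 2 isT)); [rewrite inE | subM].
have [f3 f3M m3] := cov _ E02.
case: (edgeP (matching_edge mM f3M)) => [||||||l' Hl'] ? ; subst f3.
- exfalso; apply: (clash _ _ f1M f3M); [solve_meet | rewrite setE2; nat_solve].
- by exists (inr (l, @Ordinal 3 0 isT)); [rewrite inE | subM].
- exfalso; apply: (clash _ _ f2M f3M); [solve_meet | rewrite setE2; nat_solve].
- exfalso; apply: (clash _ _ f2M f3M); [solve_meet | rewrite setE2; nat_solve].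
- exfalso; apply: (clash _ _ f1M f3M); [solve_meet | rewrite setE2; nat_solve].
- exfalso; move: m3; rewrite meets2 -?val_eqE /=; cleanup; lia.
- exfalso; move: m3; rewrite meets2 -?val_eqE /=; cleanup; lia.
Qed.

Lemma maxE : maximal_matchings g = build @: C.
Proof.
apply/setP=> M; rewrite inE; apply/idP/imsetP.
  by move/max_build.
case=> c cC ->; apply: maxl; [exact: cand_match | exact: cand_cov].
Qed.

Lemma sumC (F : 'I_4 + (T * 'I_3) -> nat) :
  \sum_(c in C) F c = \sum_(i : 'I_4) F (inl i) + \sum_(l : T | 5 <= l) \sum_(j : 'I_3) F (inr (l, j)).
Proof.
rewrite (eq_bigl (fun c : 'I_4 + (T * 'I_3) => if c is inr (l, _) then 5 <= val l else true)); last by move=> c; rewrite inE.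
rewrite big_sumType /=; congr (_ + _).
by rewrite pair_big; apply: eq_big => [[l j]|[l j] _] //=; rewrite andbT.
Qed.

Lemma sum_leaves c : \sum_(l : T | 5 <= l) c = c * m.+1.
Proof.
rewrite big_mkcond !big_ord_recl /=.
rewrite (eq_bigr (fun _ => c)) // sum_nat_const card_ord /=.
lia.
Qed.

Lemma card_count : \sum_(c in C) 1 = 3 * m.+1 + 4.
Proof.
rewrite sumC /= (eq_bigr (fun _ : T => 3)); last by move=> l _; rewrite !big_ord_recl big_ord0.
rewrite sum_leaves !big_ord_recl big_ord0 /=; lia.
Qed.

Lemma size_count : \sum_(c in C) #|build c| = 7 * m.+1 + 8.
Proof.
rewrite sumC /= (eq_bigr (fun _ : T => 7)); last first.
  move=> l Hl; rewrite !big_ord_recl big_ord0 /=.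
  rewrite cardsU1 !cards2 !inE !setE2 -?val_eqE /=.
  by [].
rewrite sum_leaves !big_ord_recl big_ord0 /=.
rewrite !cards2 !setE2 -?val_eqE /=; lia.
Qed.

End R.

Unset Implicit Arguments.
Import GRing.Theory.
Local Open Scope ring_scope.

Theorem lemma3p1 (n : nat) (hn : (6 <= n)%N) :
  avm (R33 n) = ((7 * n - 27)%N)%:R / ((3 * n - 11)%N)%:R :> rat.
Proof.
have [m ->] : exists m, n = m.+4.+2 by exists (n - 6)%N; lia.
rewrite /avm maxE -natr_sum (big_imset _ (@build_inj m)) (card_in_imset (@build_inj m)).
rewrite -sum1_card card_count size_count.
congr (_%:R / _%:R); lia.
Qed.
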